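(* Let $A\in\mathbb{R}^{n\times n}$ be Metzler and let $E\in\mathbb{R}^{n\times q}$, $C\in\mathbb{R}^{q\times n}$, $F\in\mathbb{R}^{q\times q}$ be entrywise nonnegative. Let $q=q_1+\dots+q_N$ and $$\boldsymbol{\Delta}^{\infty}:=\{\Delta=\mathrm{diag}(\Delta_1,\ldots,\Delta_N):\ \Delta_i\in\mathbb{C}^{q_i\times q_i},\ \|\Delta_i\|_\infty\le 1\},\qquad \mathcal{D}_\Delta:=\{\mathrm{diag}(d_1I_{q_1},\ldots,d_NI_{q_N}):\ d_i>0\}.$$ Consider the uncertain system $\dot x=Ax+Ew$, $z=Cx+Fw$, $w=\Delta z$. The following statements are equivalent: (i) The uncertain system is asymptotically stable for all $\Delta\in\boldsymbol{\Delta}^{\infty}$. (ii) There exist a vector $\lambda\in\mathbb{R}^n_{>0}$ and a matrix $D\in\mathcal{D}_\Delta$ such that $$\begin{bmatrix}A & E\\ C & F-I_q\end{bmatrix}\begin{bmatrix}\lambda\\ D\mathbf{1}_q\end{bmatrix}<0 .$$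
   Context: A real matrix is Metzler if all its off-diagonal entries are nonnegative. $\|\cdot\|_\infty$ is the matrix norm induced by the vector $\infty$-norm. $\mathbf{1}_q$ is the vector of ones. Vector inequalities are componentwise. The uncertain system is asymptotically stable for a given $\Delta$ if $I-F\Delta$ is invertible and $A+E\Delta(I-F\Delta)^{-1}C$ is Hurwitz stable. *)

(* Defs.v *)
From mathcomp Require Import all_boot all_order all_algebra.
From mathcomp Require Import complex reals.
Set Implicit Arguments. Unset Strict Implicit. Unset Printing Implicit Defensive.
Import Order.TTheory GRing.Theory Num.Theory.
Local Open Scope ring_scope.

Definition cmod (R : realType) (z : R[i]) : R := complex.Re `|z|.

(* induced infinity norm (max absolute row sum) of a complex m x k matrix *)
Definition mxnorm_inf (R : realType) (m k : nat) (M : 'M[R[i]]_(m, k)) : R :=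
  \big[Num.max/0]_(r < m) \sum_(c < k) cmod (M r c).

Definition metzler (R : realType) (n : nat) (A : 'M[R]_n) : Prop :=
  forall i j : 'I_n, i != j -> 0 <= A i j.

Definition nonneg_mx (R : realType) (m k : nat) (M : 'M[R]_(m, k)) : Prop :=
  forall i j, 0 <= M i j.

Definition cmx (R : realType) (m k : nat) (M : 'M[R]_(m, k)) : 'M[R[i]]_(m, k) :=
  map_mx (fun x : R => (x%:C)%C) M.

Definition hurwitz (R : realType) (n : nat) (M : 'M[R[i]]_n) : Prop :=
  forall z : R[i], eigenvalue M z -> complex.Re z < 0.

Definition uss_stable (R : realType) (n q : nat) (A : 'M[R]_n) (E : 'M[R]_(n, q))
    (C : 'M[R]_(q, n)) (F : 'M[R]_q) (Delta : 'M[R[i]]_q) : Prop :=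
  (1%:M - cmx F *m Delta) \in unitmx /\
  hurwitz (cmx A + cmx E *m Delta *m invmx (1%:M - cmx F *m Delta) *m cmx C).

(* Main.v *)
Require Import Defs.
From mathcomp Require Import all_boot all_order all_algebra.
From mathcomp Require Import complex reals ring lra boolp classical_sets.
Set Implicit Arguments. Unset Strict Implicit. Unset Printing Implicit Defensive.
Import Order.TTheory GRing.Theory Num.Theory.
Local Open Scope ring_scope.
Section Cmod.
Variable R : realType.
Implicit Types (z w : R[i]) (x : R).

Lemma cmod_norm z : `|z| = ((cmod z)%:C)%C.
Proof. by rewrite /cmod normc_def. Qed.

Lemma cmod_ge0 z : 0 <= cmod z.
Proof. by rewrite /cmod normc_def /= sqrtr_ge0. Qed.

Lemma cmodD z w : cmod (z + w) <= cmod z + cmod w.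
Proof. by have := ler_normD z w; rewrite !cmod_norm -rmorphD lecR. Qed.

Lemma cmodM z w : cmod (z * w) = cmod z * cmod w.
Proof. by apply: (@complexI R); rewrite rmorphM -!cmod_norm normrM. Qed.

Lemma cmodR x : cmod ((x%:C)%C) = `|x|.
Proof. by rewrite /cmod normc_def /= expr0n /= addr0 sqrtr_sqr. Qed.

Lemma cmod0 : cmod (0 : R[i]) = 0.
Proof. by rewrite -(rmorph0 (real_complex R)) cmodR normr0. Qed.

Lemma cmod_eq0 z : cmod z = 0 -> z = 0.
Proof. by move=> h; apply/normr0_eq0; rewrite cmod_norm h. Qed.

Lemma Re_le_cmod z : complex.Re z <= cmod z.
Proof.
rewrite /cmod normc_def /=; apply: le_trans (ler_norm _) _.
rewrite -sqrtr_sqr ler_wsqrtr // lerDl sqr_ge0 //.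
Qed.

Lemma cmod_sum (I : finType) (P : pred I) (F : I -> R[i]) :
  cmod (\sum_(i | P i) F i) <= \sum_(i | P i) cmod (F i).
Proof.
have := ler_norm_sum (index_enum I) F P.
by rewrite cmod_norm (eq_bigr _ (fun i _ => cmod_norm (F i))) -rmorph_sum lecR.
Qed.

Lemma cmodN z : cmod (- z) = cmod z.
Proof. by apply: (@complexI R); rewrite -!cmod_norm normrN. Qed.
End Cmod.
Section Diag.
Import tagnat.
Context {V : nmodType} {p : nat} {p_ : 'I_p -> nat}.

Lemma mxdiag_neq (B : forall i, 'M[V]_(p_ i)) s t :
  sig1 s != sig1 t -> (\mxdiag_i B i) s t = 0.
Proof. by move=> h; rewrite /mxdiag /mxblock mxE (negbTE h) mxE. Qed.

Lemma mxdiag_Rank (B : forall i, 'M[V]_(p_ i)) k (i j : 'I_(p_ k)) :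
  (\mxdiag_i B i) (Rank k i) (Rank k j) = B k i j.
Proof.
rewrite /mxdiag /mxblock mxE /sig1 /sig2 /Rank.
by rewrite rankK /= rankK /= eqxx conform_mx_id.
Qed.

Lemma mxdiag_cases (P : 'I_(\sum_i p_ i) -> 'I_(\sum_i p_ i) -> Prop) :
  (forall k (i j : 'I_(p_ k)), P (Rank k i) (Rank k j)) ->
  (forall s t, sig1 s != sig1 t -> P s t) -> forall s t, P s t.
Proof.
move=> h1 h2 s t; case: (eqVneq (sig1 s) (sig1 t)) => [e|]; last exact: h2.
rewrite -(sig2K s) -(sig2K t).
move: (sig2 s) (sig2 t); rewrite e => i j; exact: h1.
Qed.
End Diag.

Lemma map_mxdiag (V W : nmodType) p (p_ : 'I_p -> nat) (f : V -> W)
  (B : forall i, 'M[V]_(p_ i)) : f 0 = 0 ->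
  map_mx f (\mxdiag_i B i) = \mxdiag_i (map_mx f (B i)).
Proof.
move=> f0; apply/matrixP; apply: mxdiag_cases => [k i j|s t h].
  by rewrite mxE !mxdiag_Rank mxE.
by rewrite mxE !mxdiag_neq.
Qed.
Section MP.
Variable R : realType.

Lemma MP m (Z : 'M[R]_m) (v u : 'cV[R]_m) :
  (forall i j, i != j -> Z i j <= 0) -> (forall i, 0 < v i 0) ->
  (forall i, 0 < (Z *m v) i 0) -> (forall i, 0 <= (Z *m u) i 0) ->
  forall i, 0 <= u i 0.
Proof.
move=> Zoff vpos Zv Zu i; rewrite leNgt; apply/negP => ui.
case: (@arg_minP _ _ _ i predT (fun j => u j 0 / v j 0)) => // i0 _ Hmin.
set t := u i0 0 / v i0 0 in Hmin.
have tneg : t < 0.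
  apply: le_lt_trans (Hmin i isT) _; rewrite ltr_pdivrMr // mul0r //.
have tv j : t * v j 0 <= u j 0 by rewrite -ler_pdivlMr //; exact: Hmin.
have ui0 : u i0 0 = t * v i0 0 by rewrite /t divfK // gt_eqF.
have : (Z *m u) i0 0 <= t * (Z *m v) i0 0.
  rewrite !mxE mulr_sumr; apply: ler_sum => j _.
  case: (eqVneq j i0) => [->|ne].
    by rewrite ui0 mulrCA.
  rewrite mulrCA; apply: ler_wnM2l; first by apply: Zoff; rewrite eq_sym.
  exact: tv.
have := Zu i0; have := Zv i0; move: ((Z *m u) i0 0) ((Z *m v) i0 0) => a b.
move=> hb ha hab; nra.
Qed.
End MP.
Section Metzler.
Variable R : realType.
Variables (m : nat) (M : 'M[R]_m).
Hypothesis Moff : forall i j, i != j -> 0 <= M i j.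

Definition Pos (mu : R) := forall u : 'cV[R]_m,
  (forall i, 0 <= ((mu%:M - M) *m u) i 0) -> forall i, 0 <= u i 0.

Lemma Pos_inv mu : (mu%:M - M) \in unitmx -> Pos mu ->
  forall i j, 0 <= invmx (mu%:M - M) i j.
Proof.
move=> U P i j.
have -> : invmx (mu%:M - M) i j = (invmx (mu%:M - M) *m delta_mx j (0 : 'I_1)) i 0.
  by rewrite -colE mxE.
by apply: P => k; rewrite mulmxA mulmxV // mul1mx mxE ler0n.
Qed.

Lemma scal_sub (a b : R) : (a - b)%:M = a%:M - b%:M :> 'M[R]_m.
Proof. by rewrite raddfB. Qed.

Lemma Pos_base mu : (forall i, \sum_j M i j < mu) -> Pos mu.
Proof.
move=> h u hu; apply: (@MP _ _ (mu%:M - M) (const_mx 1)) => //.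
- by move=> i j ij; rewrite !mxE (negbTE ij) mulr0n sub0r oppr_le0 Moff.
- by move=> i; rewrite mxE ltr01.
- move=> i; rewrite mulmxBl mul_scalar_mx !mxE subr_gt0 mulr1.
  by apply: le_lt_trans (h i); apply: ler_sum => j _; rewrite mxE mulr1.
Qed.

Lemma Pos_step mu1 t : (mu1%:M - M) \in unitmx ->
  (forall i j, 0 <= invmx (mu1%:M - M) i j) -> 0 <= t ->
  (forall i, t * \sum_j invmx (mu1%:M - M) i j < 1) -> Pos (mu1 - t).
Proof.
move=> U Y0 t0 ht u hu.
set N := mu1%:M - M in U Y0 ht; set Y := invmx N in Y0 ht.
set w := ((mu1 - t)%:M - M) *m u in hu.
have e : (1%:M - t *: Y) *m u = Y *m w.
  rewrite /w scal_sub (_ : mu1%:M - t%:M - M = N - t%:M); last first.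
    by rewrite /N addrAC.
  rewrite mulmxBl mul1mx -scalemxAl (mulmxBl N) mulmxBr mulmxA mulVmx //.
  by rewrite mul1mx mul_scalar_mx scalemxAr.
apply: (@MP _ _ (1%:M - t *: Y) (const_mx 1)).
- move=> i j ij; rewrite !mxE (negbTE ij) mulr0n sub0r oppr_le0.
  exact: mulr_ge0.
- by move=> i; rewrite mxE ltr01.
- move=> i; rewrite mulmxBl mul1mx !mxE subr_gt0.
  apply: le_lt_trans (ht i); rewrite mulr_sumr; apply: ler_sum => j _.
  by rewrite !mxE mulr1.
- move=> i; rewrite e mxE; apply: sumr_ge0 => j _; exact: mulr_ge0.
Qed.

Lemma Y_bound mus s c : 0 <= s -> (mus%:M - M) \in unitmx ->
  ((mus + s)%:M - M) \in unitmx ->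
  (forall i j, 0 <= invmx ((mus + s)%:M - M) i j) ->
  (forall i, \sum_j `|invmx (mus%:M - M) i j| <= c) -> s * c <= 2^-1 ->
  forall i, \sum_j invmx ((mus + s)%:M - M) i j <= 2 * c.
Proof.
move=> s0 U1 U2 Ys0 hc sc.
set Y1 := invmx (mus%:M - M) in hc *; set Ys := invmx ((mus + s)%:M - M) in Ys0 *.
have e : Y1 = Ys + s *: (Y1 *m Ys).
  have : Y1 *m ((mus + s)%:M - M) *m Ys = Y1 by rewrite -mulmxA mulmxV // mulmx1.
  rewrite (_ : (mus + s)%:M - M = (mus%:M - M) + s%:M); last first.
    by rewrite raddfD /= addrAC.
  by rewrite mulmxDr mulVmx // mul_mx_scalar mulmxDl mul1mx -scalemxAl => ->.
pose w i := \sum_j Ys i j.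
have w0 i : 0 <= w i by apply: sumr_ge0 => j _.
have ew i : w i = \sum_j Y1 i j - s * \sum_j Y1 i j * w j.
  have -> : \sum_j Y1 i j = \sum_j (Ys i j + s * \sum_k Y1 i k * Ys k j).
    by apply: eq_bigr => j _; rewrite {1}e !mxE.
  rewrite big_split /= -mulr_sumr exchange_big /=.
  rewrite (_ : \sum_j Y1 i j * w j = \sum_j \sum_k Y1 i j * Ys j k).
    by rewrite /w addrK.
  by apply: eq_bigr => j _; rewrite /w mulr_sumr.
move=> i.
case: (@arg_maxP _ _ _ i predT w) => // i1 _ Hmax.
apply: le_trans (Hmax i isT) _.
have h1 : `|\sum_j Y1 i1 j| <= c.
  by apply: le_trans (ler_norm_sum _ _ _) (hc i1).
have h2 : `|\sum_j Y1 i1 j * w j| <= c * w i1.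
  apply: le_trans (ler_norm_sum _ _ _) _.
  apply: le_trans (_ : \sum_j `|Y1 i1 j| * w i1 <= _); last first.
    by rewrite -mulr_suml ler_wpM2r.
  apply: ler_sum => j _; rewrite normrM (ger0_norm (w0 j)).
  by apply: ler_wpM2l => //; exact: Hmax.
have h3 : w i1 <= c + s * (c * w i1).
  rewrite {1}ew; apply: le_trans (ler_norm _) _.
  apply: le_trans (ler_normB _ _) _; apply: lerD => //.
  by rewrite normrM (ger0_norm s0); apply: ler_wpM2l.
have := w0 i1; have c0 : 0 <= c by apply: le_trans (hc i1); apply: sumr_ge0.
move: (w i1) h3 => x h3 hx; nra.
Qed.
Lemma metzler_pos : (forall mu, 0 <= mu -> (mu%:M - M) \in unitmx) ->
  forall u : 'cV[R]_m, (forall i, (M *m u) i 0 <= 0) -> forall i, 0 <= u i 0.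
Proof.
move=> Mu.
suff P0 : Pos 0.
  move=> u hu; apply: P0 => i.
  by rewrite raddf0 sub0r mulNmx mxE oppr_ge0.
case: (pselect (Pos 0)) => // nP0.
pose S := fun mu : R => 0 <= mu /\ ~ Pos mu.
pose rho := \sum_i \sum_j `|M i j|.
have Sub : forall mu, S mu -> mu <= rho.
  move=> mu [_ nP]; rewrite leNgt; apply/negP => h; apply: nP; apply: Pos_base => i.
  apply: le_lt_trans h; apply: le_trans (_ : \sum_j `|M i j| <= _).
    by apply: ler_sum => j _; exact: ler_norm.
  rewrite /rho [in X in _ <= X](bigD1 i) //= lerDl; apply: sumr_ge0 => k _.
  by apply: sumr_ge0 => j _.
have S0 : S 0 by split.
have hs : has_sup S by split; [exists 0 | exists rho => x; exact: Sub].
set ms := sup S.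
have ub : forall mu, S mu -> mu <= ms by move=> mu; apply: sup_upper_bound.
have ms0 : 0 <= ms := ub 0 S0.
have Pabove : forall mu, ms < mu -> Pos mu.
  move=> mu h; case: (pselect (Pos mu)) => // nP.
  have : S mu by split => //; apply: le_trans (ltW h).
  by move/ub; rewrite leNgt h.
set Y1 := invmx (ms%:M - M).
pose c := 1 + \sum_i \sum_j `|Y1 i j|.
have hc : forall i, \sum_j `|Y1 i j| <= c.
  move=> i; rewrite /c [in X in _ <= X](bigD1 i) //= addrCA lerDl addr_ge0 //.
  by apply: sumr_ge0 => k _; apply: sumr_ge0.
have c1 : 1 <= c.
  rewrite /c lerDl; apply: sumr_ge0 => k _; apply: sumr_ge0 => j _.
  by apply: normr_ge0.
have c0 : 0 < c by apply: lt_le_trans c1.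
pose s := (8 * c)^-1.
have s0 : 0 < s by rewrite /s invr_gt0 mulr_gt0.
have sc : s * c = 8^-1.
  by rewrite /s invfM -mulrA mulVf ?mulr1 // gt_eqF.
have Ps : Pos (ms + s) by apply: Pabove; rewrite ltrDl.
have U2 : ((ms + s)%:M - M) \in unitmx.
  by apply: Mu; apply: addr_ge0 => //; apply: ltW.
have Ys0 := Pos_inv U2 Ps.
have sc2 : s * c <= 2^-1 by rewrite sc lef_pV2 ?posrE // ler_nat.
have Bd := Y_bound (ltW s0) (Mu ms ms0) U2 Ys0 hc sc2.
have [y Sy hy] : exists2 y, S y & ms - s < y.
  by apply: (@sup_gt _ S); [exists 0 | rewrite ltrBlDr ltrDl].
have yle := ub y Sy.
exfalso; case: Sy => _; apply.
have -> : y = (ms + s) - (ms + s - y) by rewrite opprB addrC subrK.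
apply: Pos_step => //; first by rewrite subr_ge0 ler_wpDr // ltW.
move=> i; apply: le_lt_trans (_ : (ms + s - y) * (2 * c) < 1).
  by apply: ler_wpM2l; [rewrite subr_ge0 ler_wpDr // ltW | exact: Bd].
have t2 : ms + s - y < 2 * s by lra.
have : (ms + s - y) * (2 * c) < 2 * s * (2 * c).
  by rewrite ltr_pM2r // mulr_gt0.
have -> : 2 * s * (2 * c) = 4 * (s * c) by ring.
rewrite sc => h; apply: lt_le_trans h _.
by rewrite ler_pdivrMr ?ltr0n // mul1r ler_nat.
Qed.
End Metzler.
Section Generic.

Lemma notunit_ker (K : fieldType) m (B : 'M[K]_m) :
  B \notin unitmx -> exists2 x : 'cV[K]_m, x != 0 & B *m x = 0.
Proof.
rewrite unitmxE unitfE negbK -det_tr => /det0P [v v0 hv].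
exists v^T; first by apply: contra v0 => /eqP h; apply/eqP/trmx_inj; rewrite h trmx0.
by apply: trmx_inj; rewrite trmx_mul trmxK hv trmx0.
Qed.

Lemma col_eigen (K : fieldType) m (B : 'M[K]_m) a (x : 'cV[K]_m) :
  x != 0 -> B *m x = a *: x -> eigenvalue B a.
Proof.
move=> x0 hx.
have : (B - a%:M) \notin unitmx.
  apply/negP => U; move: x0; rewrite -(mulKmx U x) mulmxBl hx mul_scalar_mx.
  by rewrite subrr mulmx0 eqxx.
rewrite unitmxE unitfE negbK => /det0P [v v0 hv].
apply/eigenvalueP; exists v => //.
by apply/eqP; rewrite -subr_eq0 -mul_mx_scalar -mulmxBr hv.
Qed.

Lemma nn_mul (R : realType) a b c (X : 'M[R]_(a, b)) (Y : 'M[R]_(b, c)) :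
  (forall i j, 0 <= X i j) -> (forall i j, 0 <= Y i j) ->
  forall i j, 0 <= (X *m Y) i j.
Proof. by move=> hX hY i j; rewrite mxE; apply: sumr_ge0 => k _; exact: mulr_ge0. Qed.

Lemma split_cases m1 m2 (P : 'I_(m1 + m2) -> Prop) :
  (forall i, P (lshift m2 i)) -> (forall i, P (rshift m1 i)) -> forall i, P i.
Proof. by move=> h1 h2 i; rewrite -(splitK i); case: (split i) => j /=. Qed.

Lemma sum_sel_le1 (R : realType) p (a : nat) :
  \sum_(c < p) (((c : nat) == a)%:R : R) <= 1.
Proof.
case: (ltnP a p) => h.
  rewrite (bigD1 (Ordinal h)) //= eqxx big1 ?addr0 // => c hc.
  by case: eqP => // e; move: hc; rewrite -val_eqE /= e eqxx.
rewrite big1 ?ler01 // => c _; case: eqP => // e.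
by move: (ltn_ord c); rewrite e ltnNge h.
Qed.

End Generic.
Section Cmx.
Variable R : realType.
Lemma cmxE a b (X : 'M[R]_(a, b)) : cmx X = map_mx (real_complex R) X.
Proof. by []. Qed.
Lemma cmxM a b c (X : 'M[R]_(a, b)) (Y : 'M[R]_(b, c)) : cmx (X *m Y) = cmx X *m cmx Y.
Proof. by rewrite !cmxE map_mxM. Qed.
Lemma cmxD a b (X Y : 'M[R]_(a, b)) : cmx (X + Y) = cmx X + cmx Y.
Proof. by rewrite !cmxE map_mxD. Qed.
Lemma cmxB a b (X Y : 'M[R]_(a, b)) : cmx (X - Y) = cmx X - cmx Y.
Proof. by rewrite !cmxE map_mxB. Qed.
Lemma cmx1 a : cmx (1%:M : 'M[R]_a) = 1%:M.
Proof. by rewrite !cmxE map_mx1. Qed.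
Lemma cmx0 a b : cmx (0 : 'M[R]_(a, b)) = 0.
Proof. by rewrite !cmxE map_mx0. Qed.
Lemma cmxZ a b (r : R) (X : 'M[R]_(a, b)) : cmx (r *: X) = (r%:C)%C *: cmx X.
Proof. by rewrite !cmxE map_mxZ. Qed.
Lemma cmx_eq0 a b (X : 'M[R]_(a, b)) : cmx X = 0 -> X = 0.
Proof.
move=> h; apply/matrixP => i j; move/matrixP/(_ i j): h; rewrite !mxE.
by case.
Qed.
End Cmx.
Section Main.
Variables (R : realType) (n N : nat) (qs : 'I_N -> nat).
Local Notation q := (\sum_(k < N) qs k)%N.
Variables (A : 'M[R]_n) (E : 'M[R]_(n, q)) (C : 'M[R]_(q, n)) (F : 'M[R]_q).
Hypotheses (hA : metzler A) (hE : nonneg_mx E) (hC : nonneg_mx C) (hF : nonneg_mx F).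

Definition Sm : 'M[R]_(q, N) := \matrix_(s, k) ((tagnat.sig1 s == k)%:R).
Definition Pm (sg : {ffun 'I_N -> 'I_q.+1}) : 'M[R]_(N, q) :=
  \matrix_(k, s) (((tagnat.sig1 s == k) && ((tagnat.sig2 s : nat) == sg k))%:R).
Definition Sel (sg : {ffun 'I_N -> 'I_q.+1}) k : 'M[R]_(qs k) :=
  \matrix_(i, j) (((j : nat) == sg k)%:R).

Lemma Dsel sg (th : R) :
  \mxdiag_(k < N) (th *: Sel sg k) = th *: (Sm *m Pm sg).
Proof.
rewrite /Sm /Pm; apply/matrixP; apply: mxdiag_cases => [k i j | s t h].
  rewrite mxdiag_Rank !mxE; congr (_ * _).
  rewrite [RHS](eq_bigr (fun k' => (k == k')%:R * ((k == k') && ((j : nat) == sg k'))%:R)); last first.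
    move=> k' _; rewrite [X in X * _]mxE [X in _ * X]mxE tagnat.Rank1K.
    by rewrite tagnat.Rank2K /= tagnat.Rank1K.
  rewrite [RHS](bigD1 k) //= eqxx /= mul1r [X in _ + X]big1 ?addr0 //.
  by move=> k' hk; rewrite eq_sym (negbTE hk) mul0r.
rewrite mxdiag_neq // !mxE big1 ?mulr0 // => k _; rewrite !mxE.
by case: eqP => e; [rewrite -e eq_sym (negbTE h) mulr0 | rewrite mul0r].
Qed.

Lemma Ddiag (d : 'I_N -> R) :
  (\mxdiag_(k < N) ((d k)%:M : 'M[R]_(qs k))) *m const_mx 1
  = Sm *m \col_k d k.
Proof.
have -> : const_mx 1 = \mxcol_k (const_mx 1 : 'M[R]_(qs k, 1)).
  by apply/matrixP => a b; rewrite !mxE.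
rewrite mul_mxdiag_mxcol.
have -> : \mxcol_k ((d k)%:M *m (const_mx 1 : 'M[R]_(qs k, 1)))
    = \mxcol_k (const_mx (d k) : 'M[R]_(qs k, 1)).
  by apply: eq_mxcol => k; rewrite mul_scalar_mx; apply/matrixP => a b; rewrite !mxE mulr1.
apply/matrixP => s j; rewrite /Sm !mxE.
rewrite [RHS](bigD1 (tagnat.sig1 s)) //= !mxE eqxx mul1r [X in _ + X]big1 ?addr0 //.
by move=> k hk; rewrite !mxE eq_sym (negbTE hk) mul0r.
Qed.

Definition Msg sg : 'M[R]_(n + N) :=
  block_mx A (E *m Sm) (Pm sg *m C) (Pm sg *m F *m Sm - 1%:M).

Lemma Sm_ge0 i j : 0 <= Sm i j. Proof. by rewrite mxE ler0n. Qed.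
Lemma Pm_ge0 sg i j : 0 <= Pm sg i j. Proof. by rewrite mxE ler0n. Qed.

Lemma Msg_off sg i j : i != j -> 0 <= Msg sg i j.
Proof.
rewrite /Msg; move: i j; apply: split_cases => i; apply: split_cases => j h.
- by rewrite block_mxEul; apply: hA; apply: contra h => /eqP ->.
- by rewrite block_mxEur; apply: nn_mul => //; exact: Sm_ge0.
- by rewrite block_mxEdl; apply: nn_mul => //; exact: Pm_ge0.
rewrite block_mxEdr !mxE; have -> : (i == j) = false.
  by apply/negbTE; apply: contra h => /eqP ->.
rewrite (_ : (false%:R : R) = 0) // subr0; apply: sumr_ge0 => k _.
apply: mulr_ge0; last exact: Sm_ge0.
by apply: nn_mul => //; exact: Pm_ge0.
Qed.
Definition Hi := forall Db : forall k : 'I_N, 'M[R[i]]_(qs k),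
  (forall k, mxnorm_inf (Db k) <= 1) -> uss_stable A E C F (\mxdiag_(k < N) Db k).

Lemma Msg_unit (H : Hi) sg mu : 0 <= mu -> (mu%:M - Msg sg) \in unitmx.
Proof.
move=> mu0; case: (boolP ((mu%:M - Msg sg) \in unitmx)) => // nU; exfalso.
have [u u0 hu] := notunit_ker nU.
have hM : Msg sg *m u = mu *: u.
  by move/eqP: hu; rewrite mulmxBl mul_scalar_mx subr_eq0 => /eqP <-.
set x := usubmx u in hM; set y := dsubmx u in hM.
have eu : u = col_mx x y by rewrite vsubmxK.
move: hM; rewrite eu /Msg mul_block_col scale_col_mx => /eq_col_mx [hx hy].
set th := (1 + mu)^-1.
have mu1 : 0 < 1 + mu by rewrite ltr_wpDr.
have th1 : th * (1 + mu) = 1 by rewrite mulVf // gt_eqF.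
have th0 : 0 <= th by rewrite invr_ge0 ltW.
pose Db k := cmx (th *: Sel sg k).
have nDb : forall k, mxnorm_inf (Db k) <= 1.
  move=> k; rewrite /mxnorm_inf; apply: bigmax_le => // r _.
  apply: le_trans (_ : th * 1 <= 1); last first.
    by rewrite mulr1 invf_le1 // lerDl.
  have -> : \sum_c cmod (Db k r c) = th * \sum_(c < qs k) (((c : nat) == sg k)%:R : R).
    rewrite mulr_sumr; apply: eq_bigr => c _.
    by rewrite /Db /Sel !mxE cmodR ger0_norm // mulr_ge0.
  by rewrite ler_wpM2l // sum_sel_le1.
have [U Hw] := H Db nDb.
have eD : \mxdiag_k Db k = cmx (th *: (Sm *m Pm sg)).
  rewrite -Dsel /Db /cmx map_mxdiag //.
rewrite eD in U Hw.
set T := th *: (Sm *m Pm sg) in U Hw.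
set w := Sm *m y; set z := C *m x + F *m w.
have Pz : Pm sg *m z = (1 + mu) *: y.
  move: hy; rewrite mulmxBl mul1mx addrA => /eqP; rewrite subr_eq => /eqP.
  rewrite /z /w mulmxDr !mulmxA => ->.
  by rewrite scalerDl scale1r addrC.
have Tz : T *m z = w.
  by rewrite /T -scalemxAl -mulmxA Pz -scalemxAr scalerA th1 scale1r.
have Fz : (1%:M - F *m T) *m z = C *m x.
  by rewrite mulmxBl mul1mx -mulmxA Tz /z addrK.
have cFz : (1%:M - cmx F *m cmx T) *m cmx z = cmx C *m cmx x.
  by rewrite -cmxM -(cmx1 R) -cmxB -!cmxM Fz.
case: (eqVneq x 0) => [x0 | xn0].
  have z0 : z = 0.
    apply: cmx_eq0; rewrite -(mulKmx U (cmx z)) cFz x0 cmx0 mulmx0.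
    by rewrite mulmx0.
  have y0 : y = 0.
    move: Pz; rewrite z0 mulmx0 => /esym/eqP; rewrite scaler_eq0 => /orP [].
      by rewrite gt_eqF.
    by move/eqP.
  by move: u0; rewrite eu x0 y0 col_mx0 eqxx.
have ev : eigenvalue (cmx A + cmx E *m cmx T *m invmx (1%:M - cmx F *m cmx T) *m cmx C)
            ((mu%:C)%C).
  apply: (@col_eigen _ _ _ _ (cmx x)).
    by apply: contra xn0 => /eqP /cmx_eq0 ->.
  rewrite mulmxDl -!mulmxA -cFz mulKmx // !mulmxA -!cmxM -cmxD.
  by rewrite -(mulmxA E) Tz /w mulmxA hx cmxZ.
by have := Hw _ ev; rewrite /= ltNge mu0.
Qed.
Lemma subE a b (X Y : 'M[R]_(a, b)) i j : (X - Y) i j = X i j - Y i j.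
Proof. by rewrite !mxE. Qed.

Lemma Sm_entry (v : 'cV[R]_N) s : (Sm *m v) s 0 = v (tagnat.sig1 s) 0.
Proof.
rewrite mxE (bigD1 (tagnat.sig1 s)) //= /Sm mxE eqxx mul1r.
rewrite [X in _ + X]big1 ?addr0 // => k hk.
by rewrite mxE eq_sym (negbTE hk) mul0r.
Qed.

Lemma Pm_row_sel (sg : {ffun 'I_N -> 'I_q.+1}) k (t0 : 'I_q) (v : 'cV[R]_q) :
  tagnat.sig1 t0 = k -> (tagnat.sig2 t0 : nat) = sg k ->
  (Pm sg *m v) k 0 = v t0 0.
Proof.
move=> h1 h2; rewrite mxE (bigD1 t0) //= /Pm mxE h2 eqxx h1 eqxx mul1r.
rewrite [X in _ + X]big1 ?addr0 // => t ht; rewrite mxE.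
suff -> : ((tagnat.sig1 t == k) && (tagnat.sig2 t == sg k :> nat)) = false.
  by rewrite mul0r.
apply/negbTE/negP => /andP [/eqP e1 /eqP e2]; move/negP: ht; apply; apply/eqP.
rewrite -(tagnat.sig2K t) -(tagnat.sig2K t0); apply: val_inj; apply/eqP.
by rewrite tagnat.eq_Rank e2 h2 eqxx andbT e1 h1 eqxx.
Qed.

Lemma Pm_row_eq (sg sg' : {ffun 'I_N -> 'I_q.+1}) k (v : 'cV[R]_q) : sg' k = sg k ->
  (Pm sg' *m v) k 0 = (Pm sg *m v) k 0.
Proof. by move=> e; rewrite !mxE; apply: eq_bigr => t _; rewrite !mxE e. Qed.

Lemma Msg_col sg (l : 'cV[R]_n) (v : 'cV[R]_N) :
  Msg sg *m col_mx l v =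
  col_mx (A *m l + E *m (Sm *m v)) (Pm sg *m (C *m l + F *m (Sm *m v)) - v).
Proof.
rewrite /Msg mul_block_col !mulmxA mulmxBl mul1mx mulmxDr !mulmxA.
by rewrite addrA.
Qed.

Lemma const_col a b c (r : R) :
  (const_mx r : 'M[R]_(a + b, c)) = col_mx (const_mx r) (const_mx r).
Proof.
apply/matrixP => i j; move: i; apply: split_cases => i.
  by rewrite col_mxEu !mxE.
by rewrite col_mxEd !mxE.
Qed.

Lemma Msg_strict sg (v : 'cV[R]_(n + N)) i :
  (forall j, 0 <= v j 0) -> (Msg sg *m v) i 0 < 0 -> 0 < v i 0.
Proof.
move=> v0 h; rewrite lt_neqAle v0 andbT; apply/negP => /eqP e.
move: h; rewrite mxE (bigD1 i) //= -e mulr0 add0r ltNge; apply/negP/negPn.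
apply: sumr_ge0 => j ji; apply: mulr_ge0 => //; apply: Msg_off.
by rewrite eq_sym.
Qed.

Lemma sig2_lt (s : 'I_q) : (tagnat.sig2 s < q.+1)%N.
Proof.
apply: (@leq_ltn_trans s); last by apply: ltnW; rewrite ltnS ltn_ord.
by rewrite [X in (_ <= X)%N]tagnat.rect leq_addl.
Qed.

Lemma dir12 (H : Hi) : exists (lam : 'cV[R]_n) (d : 'I_N -> R),
      (forall j, 0 < lam j 0) /\ (forall k, 0 < d k) /\
      forall r, (block_mx A E C (F - 1%:M) *m
                 col_mx lam ((\mxdiag_(k < N) ((d k)%:M : 'M[R]_(qs k)))
                             *m const_mx 1)) r 0 < 0.
Proof.
pose u sg := invmx (0%:M - Msg sg) *m (const_mx 1 : 'cV[R]_(n + N)).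
have Uu sg : (0%:M - Msg sg) \in unitmx := Msg_unit H sg (lexx 0).
have Mu sg : Msg sg *m u sg = - const_mx 1.
  have : (0%:M - Msg sg) *m u sg = const_mx 1 by rewrite mulmxA mulmxV // mul1mx.
  by rewrite raddf0 sub0r mulNmx => <-; rewrite opprK.
have Lpos sg := metzler_pos (@Msg_off sg) (fun mu h => Msg_unit H sg h).
have u0 sg j : 0 <= u sg j 0.
  by apply: (Lpos sg) => i; rewrite Mu !mxE oppr_le0 ler01.
have upos sg j : 0 < u sg j 0.
  by apply: (@Msg_strict sg) => //; rewrite Mu !mxE oppr_lt0 ltr01.
pose f sg := \sum_i u sg i 0.
case: (@arg_maxP _ _ _ ([ffun => ord0] : {ffun 'I_N -> 'I_q.+1}) predT f) => //.
move=> sgs _ Hmax.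
set us := u sgs.
set lam := usubmx us; set dv := dsubmx us.
have eus : us = col_mx lam dv by rewrite vsubmxK.
exists lam, (fun k => dv k 0).
have ed : \col_k dv k 0 = dv by apply/matrixP => i j; rewrite !mxE (ord1 j).
have [hup hlo] : A *m lam + E *m (Sm *m dv) = - const_mx 1 /\
        Pm sgs *m (C *m lam + F *m (Sm *m dv)) - dv = - const_mx 1.
  apply: eq_col_mx; rewrite -Msg_col -eus Mu const_col.
  by rewrite opp_col_mx.
split; first by move=> j; rewrite /lam mxE; apply: upos.
split; first by move=> k; rewrite /dv mxE; apply: upos.
rewrite Ddiag ed mul_block_col.
apply: split_cases => [i|s].
  by rewrite col_mxEu mulmxA -mulmxA hup !mxE oppr_lt0 ltr01.
rewrite col_mxEd; set zv := C *m lam + F *m (Sm *m dv).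
have ezs : (C *m lam + (F - 1%:M) *m (Sm *m dv)) s 0 = zv s 0 - dv (tagnat.sig1 s) 0.
  have -> : C *m lam + (F - 1%:M) *m (Sm *m dv) = zv - Sm *m dv.
    by rewrite mulmxBl mul1mx addrA.
  by rewrite subE Sm_entry.
rewrite ezs ltNge; apply/negP => hge.
set k := tagnat.sig1 s in ezs hge.
pose sg' : {ffun 'I_N -> 'I_q.+1} :=
  [ffun k' => if k' == k then inord (tagnat.sig2 s) else sgs k'].
have sgk : (tagnat.sig2 s : nat) = sg' k by rewrite ffunE eqxx inordK // sig2_lt.
have sgo k' : k' != k -> sg' k' = sgs k' by move=> h; rewrite ffunE (negbTE h).
set del := u sg' - us.
have m1 a b (i : 'I_a) (j : 'I_b) : (- const_mx 1 : 'M[R]_(a, b)) i j = -1.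
  by rewrite !mxE.
have Mdel : forall i, (Msg sg' *m del) i 0 <= 0.
  move=> i; rewrite mulmxBr Mu eus Msg_col -/zv subE.
  move: i; apply: split_cases => i.
    by rewrite col_mxEu hup !mxE subrr.
  rewrite col_mxEd subE.
  case: (eqVneq i k) => [->|ik].
    rewrite (Pm_row_sel _ (esym (erefl k)) sgk) m1; lra.
  by rewrite (Pm_row_eq _ (sgo _ ik)) -subE hlo !m1 subrr.
have d0 := Lpos sg' del Mdel.
have dk : 0 < del (rshift n k) 0.
  apply: (@Msg_strict sg') => //.
  rewrite mulmxBr Mu eus Msg_col -/zv subE col_mxEd subE.
  rewrite (Pm_row_sel _ (esym (erefl k)) sgk) m1; lra.
have : f sgs < f sg'.
  rewrite /f [X in _ < X](eq_bigr (fun i => us i 0 + del i 0)); last first.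
    by move=> i _; rewrite /del subE addrC subrK.
  rewrite big_split /= ltrDl (bigD1 (rshift n k)) //=.
  apply: (lt_le_trans dk); rewrite lerDl; apply: sumr_ge0 => i _; exact: d0.
move=> h; have h2 : f sg' <= f sgs := Hmax sg' isT.
by rewrite leNgt h in h2.
Qed.
Lemma cmx_row_bound a b (M : 'M[R]_(a, b)) (w : 'cV[R[i]]_b) i (P : pred 'I_b) :
  (forall j, P j -> 0 <= M i j) ->
  cmod (\sum_(j | P j) ((M i j)%:C)%C * w j 0) <= \sum_(j | P j) M i j * cmod (w j 0).
Proof.
move=> h; apply: le_trans (cmod_sum _ _) _; apply: ler_sum => j hj.
by rewrite cmodM cmodR ger0_norm // h.
Qed.

Lemma gen_row_bound b (Dl : 'M[R[i]]_b) (w : 'cV[R[i]]_b) i :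
  cmod ((Dl *m w) i 0) <= \sum_j cmod (Dl i j) * cmod (w j 0).
Proof.
rewrite mxE; apply: le_trans (cmod_sum _ _) _; apply: ler_sum => j _.
by rewrite cmodM.
Qed.

Lemma KP (Db : forall k : 'I_N, 'M[R[i]]_(qs k))
  (nDb : forall k, mxnorm_inf (Db k) <= 1) (d : 'I_N -> R) (d0 : forall k, 0 <= d k) s :
  \sum_t cmod ((\mxdiag_(k < N) Db k) s t) * d (tagnat.sig1 t) <= d (tagnat.sig1 s).
Proof.
have -> : \sum_t cmod ((\mxdiag_(k < N) Db k) s t) * d (tagnat.sig1 t)
        = d (tagnat.sig1 s) * \sum_t cmod ((\mxdiag_(k < N) Db k) s t).
  rewrite mulr_sumr; apply: eq_bigr => t _.
  case: (eqVneq (tagnat.sig1 s) (tagnat.sig1 t)) => [e|ne].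
    by rewrite e mulrC.
  by rewrite mxdiag_neq // cmod0 mul0r mulr0.
rewrite -[X in _ <= X]mulr1; apply: ler_wpM2l => //.
have -> : \sum_t cmod ((\mxdiag_(k < N) Db k) s t)
        = (map_mx (@cmod R) (\mxdiag_(k < N) Db k) *m (const_mx 1 : 'cV[R]_q)) s 0.
  by rewrite mxE; apply: eq_bigr => t _; rewrite !mxE mulr1.
rewrite map_mxdiag ?cmod0 //.
have -> : const_mx 1 = \mxcol_k (const_mx 1 : 'M[R]_(qs k, 1)).
  by apply/matrixP => a b; rewrite !mxE.
rewrite mul_mxdiag_mxcol mxE.
apply: le_trans (nDb (tagnat.sig1 s)).
apply: le_trans (_ : \sum_c cmod (Db (tagnat.sig1 s) (tagnat.sig2 s) c) <= _).
  by rewrite mxE; apply: ler_sum => c _; rewrite !mxE mulr1.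
rewrite /mxnorm_inf; exact: le_bigmax.
Qed.

Lemma eigen_col (K : fieldType) m (B : 'M[K]_m) a :
  eigenvalue B a -> exists2 x : 'cV[K]_m, x != 0 & B *m x = a *: x.
Proof.
case/eigenvalueP => v hv v0.
have nU : (B - a%:M) \notin unitmx.
  apply/negP => U; move: v0; rewrite -(mulmxK U v) mulmxBr hv mul_mx_scalar.
  by rewrite subrr mul0mx eqxx.
have [x x0 hx] := notunit_ker nU; exists x => //.
by apply/eqP; rewrite -subr_eq0 -mul_scalar_mx -mulmxBl hx.
Qed.
Lemma cmx_mul_entry a b (M : 'M[R]_(a, b)) (w : 'cV[R[i]]_b) i :
  (cmx M *m w) i 0 = \sum_j ((M i j)%:C)%C * w j 0.
Proof. by rewrite mxE; apply: eq_bigr => j _; rewrite mxE. Qed.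

Lemma nnmx_vec a b (M : 'M[R]_(a, b)) (w : 'cV[R]_b) i :
  (forall i j, 0 <= M i j) -> (forall j, 0 <= w j 0) -> 0 <= (M *m w) i 0.
Proof. by move=> h1 h2; rewrite mxE; apply: sumr_ge0 => j _; apply: mulr_ge0. Qed.

Lemma ZB (Db : forall k : 'I_N, 'M[R[i]]_(qs k))
  (nDb : forall k, mxnorm_inf (Db k) <= 1) (lam : 'cV[R]_n) (d : 'I_N -> R)
  (dpos : forall k, 0 < d k) (lam0 : forall j, 0 <= lam j 0)
  (hCz : forall s, (C *m lam + F *m (Sm *m \col_k d k)) s 0 < d (tagnat.sig1 s))
  (x : 'cV[R[i]]_n) (z : 'cV[R[i]]_q) (t : R) : 0 <= t ->
  z = cmx C *m x + cmx F *m (\mxdiag_(k < N) Db k *m z) ->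
  (forall j, cmod (x j 0) <= t * lam j 0) ->
  forall s, cmod (z s 0) <= t * d (tagnat.sig1 s).
Proof.
move=> t0 ez hx s.
set Dl := \mxdiag_(k < N) Db k in ez *.
have Sme r : (Sm *m \col_k d k) r 0 = d (tagnat.sig1 r) by rewrite Sm_entry mxE.
case: (@arg_maxP _ _ _ s predT (fun r => cmod (z r 0) / d (tagnat.sig1 r))) => //.
move=> s0 _ Hm.
set u := cmod (z s0 0) / d (tagnat.sig1 s0) in Hm.
have hz r : cmod (z r 0) <= u * d (tagnat.sig1 r).
  by rewrite -ler_pdivrMr //; exact: Hm r isT.
have u0 : 0 <= u by rewrite divr_ge0 // ?cmod_ge0 // ltW.
have hw r : cmod ((Dl *m z) r 0) <= u * d (tagnat.sig1 r).
  apply: le_trans (gen_row_bound _ _ _) _.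
  apply: le_trans (_ : \sum_j cmod (Dl r j) * (u * d (tagnat.sig1 j)) <= _).
    by apply: ler_sum => j _; apply: ler_wpM2l; [exact: cmod_ge0 | exact: hz].
  rewrite (eq_bigr (fun j => u * (cmod (Dl r j) * d (tagnat.sig1 j)))); last first.
    by move=> j _; rewrite mulrCA.
  rewrite -mulr_sumr; apply: ler_wpM2l => //; apply: KP => // k.
  exact: ltW.
have key : u * d (tagnat.sig1 s0) <=
    t * (C *m lam) s0 0 + u * (F *m (Sm *m \col_k d k)) s0 0.
  have -> : u * d (tagnat.sig1 s0) = cmod (z s0 0).
    by rewrite /u divfK // gt_eqF.
  rewrite {1}ez mxE !cmx_mul_entry.
  apply: le_trans (cmodD _ _) _; apply: lerD.
    apply: le_trans (@cmx_row_bound _ _ C x s0 (fun _ => true) (fun j _ => hC s0 j)) _.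
    rewrite mxE mulr_sumr; apply: ler_sum => j _.
    by rewrite mulrCA; apply: ler_wpM2l; [apply: hC | exact: hx].
  apply: le_trans (@cmx_row_bound _ _ F _ s0 (fun _ => true) (fun j _ => hF s0 j)) _.
  rewrite mxE mulr_sumr; apply: ler_sum => j _.
  by rewrite Sme mulrCA; apply: ler_wpM2l; [apply: hF | exact: hw].
have hu : u <= t.
  have := hCz s0; rewrite mxE.
  have ha : 0 <= (C *m lam) s0 0 by apply: nnmx_vec.
  have hb : 0 <= (F *m (Sm *m \col_k d k)) s0 0.
    by apply: nnmx_vec => // j; rewrite Sme ltW.
  have hd := dpos (tagnat.sig1 s0).
  move: key ha hb hd; move: ((C *m lam) s0 0) ((F *m (Sm *m \col_k d k)) s0 0).
  move: (d (tagnat.sig1 s0)) => dd aa bb; nra.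
apply: le_trans (hz s) _; apply: ler_wpM2r => //; exact: ltW.
Qed.
Lemma dir21 : (exists (lam : 'cV[R]_n) (d : 'I_N -> R),
      (forall j, 0 < lam j 0) /\ (forall k, 0 < d k) /\
      forall r, (block_mx A E C (F - 1%:M) *m
                 col_mx lam ((\mxdiag_(k < N) ((d k)%:M : 'M[R]_(qs k)))
                             *m const_mx 1)) r 0 < 0) -> Hi.
Proof.
case=> lam [d [lpos [dpos hneg]]] Db nDb.
set dc := \col_k d k.
have dce k : dc k 0 = d k by rewrite /dc mxE.
have hneg' r : (block_mx A E C (F - 1%:M) *m col_mx lam (Sm *m dc)) r 0 < 0.
  by rewrite /dc -Ddiag.
have hAx j : (A *m lam + E *m (Sm *m dc)) j 0 < 0.
  by have := hneg' (lshift q j); rewrite mul_block_col col_mxEu.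
have hCz s : (C *m lam + F *m (Sm *m dc)) s 0 < d (tagnat.sig1 s).
  have := hneg' (rshift n s); rewrite mul_block_col col_mxEd.
  rewrite (_ : C *m lam + (F - 1%:M) *m (Sm *m dc)
             = (C *m lam + F *m (Sm *m dc)) - Sm *m dc); last first.
    by rewrite mulmxBl mul1mx addrA.
  by rewrite subE Sm_entry dce subr_lt0.
have lam0 j : 0 <= lam j 0 by apply: ltW.
set Dl := \mxdiag_(k < N) Db k.
have ZB' := ZB nDb dpos lam0 hCz.
have Sme r : (Sm *m dc) r 0 = d (tagnat.sig1 r) by rewrite Sm_entry dce.
have U : (1%:M - cmx F *m Dl) \in unitmx.
  case: (boolP ((1%:M - cmx F *m Dl) \in unitmx)) => // nU; exfalso.
  have [y y0 hy] := notunit_ker nU.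
  have ey : y = cmx C *m 0 + cmx F *m (Dl *m y).
    move/eqP: hy; rewrite mulmxBl mul1mx subr_eq0 mulmx0 add0r mulmxA.
    by move/eqP.
  have hx0 : forall j, cmod ((0 : 'cV[R[i]]_n) j 0) <= 0 * lam j 0.
    by move=> j; rewrite mxE cmod0 mul0r.
  have h := ZB' 0 y 0 (lexx 0) ey hx0.
  move/negP: y0; apply; apply/eqP/matrixP => s j; rewrite (ord1 j) mxE.
  apply: cmod_eq0; apply/le_anti; rewrite cmod_ge0 andbT.
  by have := h s; rewrite mul0r.
split => // mu ev; rewrite ltNge; apply/negP => hre.
have [x x0 hx] := eigen_col ev.
set z := invmx (1%:M - cmx F *m Dl) *m (cmx C *m x).
have ez : z = cmx C *m x + cmx F *m (Dl *m z).
  have : (1%:M - cmx F *m Dl) *m z = cmx C *m x by rewrite mulKVmx.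
  rewrite mulmxBl mul1mx => /eqP; rewrite subr_eq => /eqP {1}->.
  by rewrite -[in LHS]mulmxA.
have hxz : cmx A *m x + cmx E *m (Dl *m z) = mu *: x.
  by rewrite -hx mulmxDl /z !mulmxA.
have [j1 hj1] : exists j1, x j1 0 != 0.
  case: (pselect (exists j1, x j1 0 != 0)) => // nex; exfalso.
  move/negP: x0; apply; apply/eqP/matrixP => i k; rewrite (ord1 k) mxE.
  by apply/eqP; apply/negPn/negP => h; apply: nex; exists i.
case: (@arg_maxP _ _ _ j1 predT (fun j => cmod (x j 0) / lam j 0)) => //.
move=> j0 _ Hm.
set t := cmod (x j0 0) / lam j0 0 in Hm.
have hxb j : cmod (x j 0) <= t * lam j 0.
  by rewrite -ler_pdivrMr //; exact: Hm j isT.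
have tpos : 0 < t.
  apply: lt_le_trans (Hm j1 isT); rewrite divr_gt0 //.
  rewrite lt_neqAle cmod_ge0 andbT eq_sym; apply: contra hj1 => /eqP h.
  by apply/eqP; apply: cmod_eq0.
have hz := ZB' x z t (ltW tpos) ez hxb.
have hw r : cmod ((Dl *m z) r 0) <= t * d (tagnat.sig1 r).
  apply: le_trans (gen_row_bound _ _ _) _.
  apply: le_trans (_ : \sum_j cmod (Dl r j) * (t * d (tagnat.sig1 j)) <= _).
    by apply: ler_sum => j _; apply: ler_wpM2l; [exact: cmod_ge0 | exact: hz].
  rewrite (eq_bigr (fun j => t * (cmod (Dl r j) * d (tagnat.sig1 j)))); last first.
    by move=> j _; rewrite mulrCA.
  rewrite -mulr_sumr; apply: ler_wpM2l; first exact: ltW.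
  by apply: KP => // k; exact: ltW.
set a := A j0 j0.
set P := \sum_(l | l != j0) A j0 l * lam l 0.
set Q := \sum_s E j0 s * d (tagnat.sig1 s).
have hneg0 : a * lam j0 0 + P + Q < 0.
  have := hAx j0; rewrite mxE !mxE (bigD1 j0) //=.
  by rewrite (eq_bigr (fun s => E j0 s * d (tagnat.sig1 s))) // => s _; rewrite Sme.
have erow : (mu - (a%:C)%C) * x j0 0 =
    \sum_(l | l != j0) ((A j0 l)%:C)%C * x l 0 + \sum_s ((E j0 s)%:C)%C * (Dl *m z) s 0.
  move/matrixP: hxz => /(_ j0 0); rewrite mxE !cmx_mul_entry (bigD1 j0) //= mxE.
  move=> h; rewrite mulrBl -h; rewrite /a; ring.
have hA' : forall l, l != j0 -> 0 <= A j0 l by move=> l hl; apply: hA; rewrite eq_sym.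
have hb : cmod (mu - (a%:C)%C) * cmod (x j0 0) <= t * P + t * Q.
  rewrite -cmodM erow; apply: le_trans (cmodD _ _) _; apply: lerD.
    apply: le_trans (@cmx_row_bound _ _ A x j0 (fun l => l != j0) hA') _.
    rewrite /P mulr_sumr; apply: ler_sum => l hl.
    by rewrite mulrCA; apply: ler_wpM2l; [apply: hA' | exact: hxb].
  apply: le_trans (@cmx_row_bound _ _ E _ j0 (fun _ => true) (fun s _ => hE j0 s)) _.
  rewrite /Q mulr_sumr; apply: ler_sum => s _.
  by rewrite mulrCA; apply: ler_wpM2l; [apply: hE | exact: hw].
have hre2 : - a <= cmod (mu - (a%:C)%C).
  apply: le_trans (Re_le_cmod _); rewrite raddfB /= lerBrDr addrC subrr.
  by [].
have ex0 : cmod (x j0 0) = t * lam j0 0 by rewrite /t divfK // gt_eqF.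
rewrite ex0 in hb.
have l0 := lpos j0.
move: hb hre2 hneg0 tpos l0.
move: (cmod (mu - (a%:C)%C)) (lam j0 0) => cm l hb hre2 hneg0 tpos l0.
have h1 : 0 <= (cm + a) * (t * l) by apply: mulr_ge0; [lra | nra].
nra.
Qed.
End Main.

Unset Implicit Arguments.
Theorem theorem5 (R : realType) (n N : nat) (qs : 'I_N -> nat)
    (A : 'M[R]_n) (E : 'M[R]_(n, \sum_(k < N) qs k))
    (C : 'M[R]_(\sum_(k < N) qs k, n)) (F : 'M[R]_(\sum_(k < N) qs k)) :
  metzler A -> nonneg_mx E -> nonneg_mx C -> nonneg_mx F ->
  ((forall Db : forall k : 'I_N, 'M[R[i]]_(qs k),
      (forall k, mxnorm_inf (Db k) <= 1) ->
      uss_stable A E C F (\mxdiag_(k < N) Db k))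
   <->
   (exists (lam : 'cV[R]_n) (d : 'I_N -> R),
      (forall j, 0 < lam j 0) /\ (forall k, 0 < d k) /\
      forall r, (block_mx A E C (F - 1%:M) *m
                 col_mx lam ((\mxdiag_(k < N) ((d k)%:M : 'M[R]_(qs k)))
                             *m const_mx 1)) r 0 < 0)).
Proof.
move=> hA hE hC hF; split => H.
  by apply: dir12 => //.
by apply: dir21 => //.
Qed.
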